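(* Let $f_1(x)=\frac25x$ for $x<0$ and $f_1(x)=\frac15x$ for $x\ge0$, let $f_2(x)=\frac13x$, and for $\varepsilon>0$ let $\widehat f_{2}(x)=\frac13x+\varepsilon$. Consider the CPLIFSs $\mathcal{F}=\{f_1,f_2\}$ and $\widehat{\mathcal{F}}_\varepsilon=\{f_1,\widehat f_2\}$. Let $s_0$ be the unique $s>0$ with $(1/3)^s+(1/5)^s=1$. Then for every $\varepsilon>0$ the natural dimension of $\widehat{\mathcal{F}}_\varepsilon$ equals $s_0$, while the natural dimension of $\mathcal{F}$ is strictly larger than $s_0$. In particular the natural dimension of $\widehat{\mathcal F}_\varepsilon$ does not converge to that of $\mathcal F$ as $\varepsilon\to0$.
   Context: For a CPLIFS (finite family $\{f_k\}_{k=1}^m$ of continuous piecewise linear contractions of $\mathbb{R}$ with nonzero slopes of absolute value $<1$ and finitely many breaking points), let $I$ be the smallest nonempty compact interval with $f_k(I)\subset I$ for all $k$; if the attractor (the unique nonempty compact $\Lambda=\bigcup_kf_k(\Lambda)$) is a single point $\phi$ (e.g. a common fixed point), set $I=[\phi-\frac12,\phi+\frac12]$. The natural pressure is $\Phi(s)=\limsup_{n\to\infty}\frac1n\log\sum_{(i_1,\dots,i_n)\in[m]^n}|f_{i_1}\circ\dots\circ f_{i_n}(I)|^s$; it is strictly decreasing with $\Phi(0)>0$ and $\Phi(s)\to-\infty$, and the natural dimension is its unique zero. *)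

(* Defs.v *)
From HB Require Import structures.
From mathcomp Require Import all_boot all_order all_algebra.
From mathcomp Require Import all_classical all_reals all_analysis.
Set Implicit Arguments. Unset Strict Implicit. Unset Printing Implicit Defensive.
Import Order.TTheory GRing.Theory Num.Theory.
Import numFieldNormedType.Exports.
Local Open Scope classical_set_scope.
Local Open Scope ring_scope.

Section CPLIFS.
Variable R : realType.

Definition invariant_interval (m : nat) (fs : 'I_m -> R -> R) (a b : R) :=
  a <= b /\ forall (k : 'I_m) x, a <= x <= b -> a <= fs k x <= b.

Definition smallest_invariant_interval (m : nat) (fs : 'I_m -> R -> R) (a b : R) :=
  invariant_interval fs a b /\
  forall c d, invariant_interval fs c d -> c <= a /\ b <= d.

Definition is_attractor (m : nat) (fs : 'I_m -> R -> R) (L : set R) :=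
  L !=set0 /\ compact L /\ L = \bigcup_(k in [set: 'I_m]) (fs k @` L).

Definition cplifs_interval (m : nat) (fs : 'I_m -> R -> R) (a b : R) :=
  (exists phi, is_attractor fs [set phi] /\ a = phi - 2^-1 /\ b = phi + 2^-1)
  \/ ((~ exists phi, is_attractor fs [set phi]) /\ smallest_invariant_interval fs a b).

Definition comp_word (m : nat) (fs : 'I_m -> R -> R) (w : seq 'I_m) : R -> R :=
  foldr (fun i g => fs i \o g) id w.

Definition image_length (g : R -> R) (a b : R) : R :=
  sup [set d | exists x y, a <= x <= b /\ a <= y <= b /\ d = `|g x - g y|].

Definition natural_pressure (m : nat) (fs : 'I_m -> R -> R) (a b s : R) : \bar R :=
  limn_esup (fun n : nat =>
    ((n%:R)^-1 * ln (\sum_(w : n.-tuple 'I_m)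
                       (image_length (comp_word fs w) a b) `^ s))%:E).

Definition natural_dimension (m : nat) (fs : 'I_m -> R -> R) (d : R) :=
  exists a b, cplifs_interval fs a b /\
    natural_pressure fs a b d = 0%E /\
    (forall t, natural_pressure fs a b t = 0%E -> t = d).

Definition f1 (x : R) : R := if x < 0 then (2 / 5) * x else (1 / 5) * x.
Definition f2 (x : R) : R := (1 / 3) * x.
Definition f2hat (eps : R) (x : R) : R := (1 / 3) * x + eps.

Definition famF : 'I_2 -> R -> R := fun k => if val k == 0%N then f1 else f2.
Definition famFhat (eps : R) : 'I_2 -> R -> R :=
  fun k => if val k == 0%N then f1 else f2hat eps.

End CPLIFS.

(* Main.v *)
Require Import Defs.
From HB Require Import structures.
From mathcomp Require Import all_boot all_order all_algebra.
From mathcomp Require Import all_classical all_reals all_analysis.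
From mathcomp Require Import lra.
Import Order.TTheory GRing.Theory Num.Theory.
Import numFieldNormedType.Exports.
Local Open Scope classical_set_scope.
Local Open Scope ring_scope.

Section H.
Variable R : realType.



Lemma sum_tuple_prod (m n : nat) (F : 'I_m -> R) :
  \sum_(w : n.-tuple 'I_m) \prod_(i <- w) F i = (\sum_i F i) ^+ n.
Proof.
elim: n => [|n IH].
  rewrite (eq_bigr (fun=> 1)); last by move=> w _; rewrite tuple0 big_nil.
  by rewrite sumr_const card_tuple expr0 /= expn0.
rewrite exprS -IH mulr_suml.
rewrite (reindex (fun p : 'I_m * n.-tuple 'I_m => [tuple of p.1 :: p.2])) /=; last first.
  exists (fun t : n.+1.-tuple 'I_m => (thead t, [tuple of behead t])).
    by move=> [i t] _ /=; congr pair; apply: val_inj.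
  by move=> t _; apply: val_inj => /=; case: t => -[|x s] //= _.
rewrite -(pair_big (fun _ => true) (fun _ => true) (fun (i : 'I_m) (t : n.-tuple 'I_m) => \prod_(j <- [tuple of i :: t]) F j)) /=.
apply: eq_bigr => i _; rewrite mulr_sumr; apply: eq_bigr => t _.
by rewrite big_cons.
Qed.

Lemma image_length_mono (g : R -> R) a b : a <= b ->
  (forall x y, a <= x -> x <= y -> y <= b -> g x <= g y) ->
  image_length g a b = g b - g a.
Proof.
move=> ab gm.
have gab : g a <= g b by apply: gm.
rewrite /image_length; set E := (X in sup X).
have Em : E (g b - g a).
  rewrite /E /=; exists b, a; split; first by rewrite ab lexx.
  split; first by rewrite lexx ab.
  by rewrite ger0_norm // subr_ge0.
have ub : ubound E (g b - g a).
  move=> d [x [y [/andP[ax xb] [/andP[ay yb] ->]]]].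
  have gx1 : g a <= g x by apply: gm.
  have gx2 : g x <= g b by apply: gm.
  have gy1 : g a <= g y by apply: gm.
  have gy2 : g y <= g b by apply: gm.
  rewrite ler_norml; apply/andP; split; lra.
apply/eqP; rewrite eq_le; apply/andP; split.
  by apply: ge_sup => //; exists (g b - g a).
by apply: sup_upper_bound => //; split; [exists (g b - g a)|exists (g b - g a)].
Qed.



Lemma cvg_invn : (fun n : nat => (n%:R : R)^-1) @ \oo --> 0.
Proof. by rewrite -cvg_shiftS; exact: cvg_harmonic. Qed.

Lemma lim_pressure (S : nat -> R) r k1 k2 : 0 < r -> 0 < k1 -> 0 < k2 ->
  (forall n, (0 < n)%N -> k1 * r ^+ n <= S n <= k2 * r ^+ n) ->
  limn_esup (fun n => ((n%:R)^-1 * ln (S n))%:E) = (ln r)%:E.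
Proof.
move=> r0 k10 k20 H.
have cv k : (fun n : nat => ln r + ln k * (n%:R)^-1) @ \oo --> ln r.
  rewrite -[X in _ --> X]addr0 -(mulr0 (ln k)).
  apply: cvgD; first exact: cvg_cst.
  by apply: cvgM; [exact: cvg_cst | exact: cvg_invn].
apply: (cvg_limn_einf_sup (u := fun n => ((n%:R)^-1 * ln (S n))%:E) (l := (ln r)%:E) _).2.
apply: cvg_EFin; first exact: nearW.
apply: (squeeze_cvgr _ (cv k1) (cv k2)).
near=> n.
have n0 : (0 < n)%N by near: n; exists 1%N.
have /andP[h1 h2] := H n n0.
have rn : 0 < r ^+ n by rewrite exprn_gt0.
have Sn : 0 < S n by apply: lt_le_trans h1; rewrite mulr_gt0.
have nR : 0 < (n%:R : R) by rewrite ltr0n.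
have l1 := h1; rewrite -ler_ln ?posrE ?mulr_gt0 // in l1.
have l2 := h2; rewrite -ler_ln ?posrE ?mulr_gt0 // in l2.
rewrite !lnM ?posrE // lnXn // in l1 l2.
rewrite -mulr_natr in l1 l2.
apply/andP; split => /=.
  rewrite -(ler_pM2l nR) mulrA mulfV ?gt_eqF // mul1r mulrDr mulrCA mulfV ?gt_eqF // mulr1.
  lra.
rewrite -(ler_pM2l nR) mulrA mulfV ?gt_eqF // mul1r mulrDr mulrCA mulfV ?gt_eqF // mulr1.
lra.
Unshelve. all: by end_near.
Qed.



Definition aH (i : 'I_2) : R := if val i == 0%N then 1/5 else 1/3.
Definition aN (i : 'I_2) : R := if val i == 0%N then 2/5 else 1/3.

Lemma aH_gt0 i : 0 < aH i. Proof. rewrite /aH; case: ifP => _; lra. Qed.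
Lemma aN_gt0 i : 0 < aN i. Proof. rewrite /aN; case: ifP => _; lra. Qed.

Lemma hat_word (eps : R) (w : seq 'I_2) : 0 < eps ->
  exists c, 0 <= c /\ forall x, 0 <= x ->
    comp_word (famFhat eps) w x = (\prod_(i <- w) aH i) * x + c.
Proof.
move=> e0; elim: w => [|i w [c [c0 IH]]].
  by exists 0; split => // x _; rewrite big_nil mul1r addr0.
have P0 : 0 < \prod_(j <- w) aH j by apply: prodr_gt0 => j _; exact: aH_gt0.
case Hi : (val i == 0%N).
  exists (1/5 * c); split; first lra.
  move=> x x0 /=; rewrite IH // big_cons /famFhat /aH Hi /f1.
  have -> : (\prod_(j <- w) aH j * x + c < 0) = false.
    apply/negbTE; rewrite -leNgt; apply: addr_ge0 => //; exact: mulr_ge0 (ltW P0) x0.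
  rewrite -/aH; lra.
exists (1/3 * c + eps); split; first lra.
move=> x x0 /=; rewrite IH // big_cons /famFhat /aH Hi /f2hat -/aH; lra.
Qed.

Lemma F_word (w : seq 'I_2) x :
  comp_word (@famF R) w x =
    if x < 0 then (\prod_(i <- w) aN i) * x else (\prod_(i <- w) aH i) * x.
Proof.
elim: w => [|i w IH]; first by rewrite /= !big_nil !mul1r; case: ifP.
have P0 : 0 < \prod_(j <- w) aH j by apply: prodr_gt0 => j _; exact: aH_gt0.
have P1 : 0 < \prod_(j <- w) aN j by apply: prodr_gt0 => j _; exact: aN_gt0.
rewrite /= IH !big_cons /famF; case Hi : (val i == 0%N).
  have eH : aH i = 1/5 by rewrite /aH Hi.
  have eN : aN i = 2/5 by rewrite /aN Hi.
  rewrite eH eN /f1; case Hx : (x < 0).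
    by rewrite pmulr_rlt0 // Hx mulrA.
  by rewrite pmulr_rlt0 // Hx mulrA.
have eH : aH i = 1/3 by rewrite /aH Hi.
have eN : aN i = 1/3 by rewrite /aN Hi.
by rewrite eH eN /f2; case: (x < 0); rewrite mulrA.
Qed.

Lemma powR_prod (w : seq 'I_2) (F : 'I_2 -> R) t : (forall i, 0 <= F i) ->
  (\prod_(i <- w) F i) `^ t = \prod_(i <- w) (F i `^ t).
Proof.
move=> F0; elim: w => [|i w IH]; first by rewrite !big_nil powR1.
by rewrite !big_cons powRM ?IH //; apply: prodr_ge0.
Qed.

Definition pH (t : R) := (1/5 : R) `^ t + (1/3 : R) `^ t.
Definition pN (t : R) := (2/5 : R) `^ t + (1/3 : R) `^ t.

Lemma sumH t : \sum_(i < 2) aH i `^ t = pH t.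
Proof. by rewrite big_ord_recl big_ord1 /aH /=. Qed.
Lemma sumN t : \sum_(i < 2) aN i `^ t = pN t.
Proof. by rewrite big_ord_recl big_ord1 /aN /=. Qed.

Lemma pH_gt0 t : 0 < pH t.
Proof. by rewrite /pH addr_gt0 // powR_gt0 //; lra. Qed.
Lemma pN_gt0 t : 0 < pN t.
Proof. by rewrite /pN addr_gt0 // powR_gt0 //; lra. Qed.

Lemma powR_decr (a t1 t2 : R) : 0 < a -> a < 1 -> t1 < t2 -> a `^ t2 < a `^ t1.
Proof.
move=> a0 a1 t12; rewrite /powR gt_eqF // ltr_expR.
have : ln a < 0 by apply: ln_lt0; rewrite a0 a1.
nra.
Qed.

Lemma powR_between (a x t : R) : 0 < a -> a / 2 <= x -> x <= a ->
  expR (- (`|t| * ln 2)) * a `^ t <= x `^ t <= expR (`|t| * ln 2) * a `^ t.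
Proof.
move=> a0 xl xu.
have x0 : 0 < x by apply: lt_le_trans xl; lra.
rewrite /powR !gt_eqF // -!expRD !ler_expR.
have h1 : ln x <= ln a by rewrite ler_ln ?posrE.
have h2 : ln (a / 2) <= ln x by rewrite ler_ln ?posrE //; lra.
rewrite ln_div ?posrE // in h2.
have l2 : 0 <= ln (2 : R) by apply: ln_ge0; lra.
have : `|t * ln x - t * ln a| <= `|t| * ln 2.
  rewrite -mulrBr normrM; apply: ler_wpM2l => //.
  rewrite ler_norml; apply/andP; split; lra.
rewrite ler_norml => /andP[u v]; apply/andP; split; lra.
Qed.

Lemma press_hat (eps t : R) : 0 < eps ->
  natural_pressure (famFhat eps) 0 (3/2 * eps) t = (ln (pH t))%:E.
Proof.
move=> e0; set L := 3/2 * eps.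
have L0 : 0 < L by rewrite /L; lra.
rewrite /natural_pressure.
apply: (@lim_pressure
  (fun n => \sum_(w : n.-tuple 'I_2) (image_length (comp_word (famFhat eps) w) 0 L) `^ t)
  _ (L `^ t) (L `^ t) (pH_gt0 t) (powR_gt0 _ L0) (powR_gt0 _ L0)).
move=> n _.
suff -> : \sum_(w : n.-tuple 'I_2) (image_length (comp_word (famFhat eps) w) 0 L) `^ t
   = L `^ t * pH t ^+ n by rewrite lexx.
rewrite -sumH -sum_tuple_prod mulr_sumr; apply: eq_bigr => w _.
have [c [c0 Hc]] := @hat_word eps w e0.
have P0 : 0 < \prod_(i <- w) aH i by apply: prodr_gt0 => j _; exact: aH_gt0.
rewrite image_length_mono; first last.
- move=> x y x0 xy _; rewrite !Hc //; last exact: le_trans xy.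
  by rewrite lerD2r ler_pM2l.
- exact: ltW.
rewrite !Hc ?lexx ?(ltW L0) // mulr0 add0r addrK.
rewrite powRM ?(ltW P0) ?(ltW L0) // mulrC powR_prod //.
by move=> i; exact: ltW (aH_gt0 i).
Qed.

Lemma press_F (t : R) :
  natural_pressure (@famF R) (0 - 2^-1) (0 + 2^-1) t = (ln (pN t))%:E.
Proof.
rewrite /natural_pressure.
set K1 := expR (- (`|t| * ln 2)).
set K2 := expR (`|t| * ln 2).
apply: (@lim_pressure
  (fun n => \sum_(w : n.-tuple 'I_2) (image_length (comp_word (@famF R) w) (0 - 2^-1) (0 + 2^-1)) `^ t)
  _ K1 K2 (pN_gt0 t) (expR_gt0 _) (expR_gt0 _)).
move=> n _.
have E w : image_length (comp_word (@famF R) w) (0 - 2^-1) (0 + 2^-1)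
    = (\prod_(i <- w) aN i + \prod_(i <- w) aH i) / 2.
  have P0 : 0 < \prod_(i <- w) aH i by apply: prodr_gt0 => j _; exact: aH_gt0.
  have P1 : 0 < \prod_(i <- w) aN i by apply: prodr_gt0 => j _; exact: aN_gt0.
  rewrite image_length_mono; first last.
  - move=> x y _ xy _; rewrite !F_word.
    case: ifP => hx; case: ifP => hy.
    + by rewrite ler_pM2l.
    + apply: (@le_trans _ _ 0); first by rewrite pmulr_rle0 //; apply: ltW; rewrite hx.
      by rewrite pmulr_rge0 // leNgt hy.
    + by move: hx; rewrite (le_lt_trans xy hy).
    + by rewrite ler_pM2l.
  - lra.
  rewrite !F_word.
  have -> : (0 + 2^-1 < 0 :> R) = false by apply/negbTE; rewrite -leNgt; lra.
  have -> : (0 - 2^-1 < 0 :> R) = true by apply/idP; lra.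
  lra.
have AB w : \prod_(i <- w) aH i <= \prod_(i <- w) aN i.
  apply: ler_prod => i _; rewrite (ltW (aH_gt0 i)) /aH /aN; case: ifP => _; lra.
have B w : K1 * (\prod_(i <- w) aN i) `^ t <= (image_length (comp_word (@famF R) w) (0 - 2^-1) (0 + 2^-1)) `^ t
    <= K2 * (\prod_(i <- w) aN i) `^ t.
  have P0 : 0 < \prod_(i <- w) aH i by apply: prodr_gt0 => j _; exact: aH_gt0.
  have P1 : 0 < \prod_(i <- w) aN i by apply: prodr_gt0 => j _; exact: aN_gt0.
  rewrite E; apply: powR_between => //.
    have := AB w; lra.
  have := AB w; lra.
have SN : \sum_(w : n.-tuple 'I_2) (\prod_(i <- w) aN i) `^ t = pN t ^+ n.
  rewrite -sumN -sum_tuple_prod; apply: eq_bigr => w _.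
  by rewrite powR_prod // => i; exact: ltW (aN_gt0 i).
rewrite -SN !mulr_sumr; apply/andP; split; apply: ler_sum => w _; by case/andP: (B w).
Qed.

Lemma pH_decr t1 t2 : t1 < t2 -> pH t2 < pH t1.
Proof. by move=> t12; rewrite /pH ltrD // powR_decr //; lra. Qed.
Lemma pN_decr t1 t2 : t1 < t2 -> pN t2 < pN t1.
Proof. by move=> t12; rewrite /pN ltrD // powR_decr //; lra. Qed.

Lemma cpow (a : R) : 0 < a -> continuous (fun t : R => a `^ t).
Proof.
move=> a0; have -> : (fun t => a `^ t) = expR \o (fun t => t * ln a).
  by apply/funext => t; rewrite /powR gt_eqF.
move=> x; apply: continuous_comp; last exact: continuous_expR.
by apply: cvgMr_tmp; exact: cvg_id.
Qed.

Lemma pN_cont : continuous pN.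
Proof.
have -> : pN = (fun t => (2/5 : R) `^ t) + (fun t => (1/3 : R) `^ t) by [].
move=> x; apply: continuousD; apply: cpow; lra.
Qed.

End H.
Arguments pH {R}. Arguments pN {R}. Arguments pH_decr {R}. Arguments pN_decr {R}.
Arguments pH_gt0 {R}. Arguments pN_gt0 {R}. Arguments pN_cont {R}.

Theorem mainTheorem6 (R : realType) (s0 : R) :
  0 < s0 -> (1 / 3 : R) `^ s0 + (1 / 5 : R) `^ s0 = 1 ->
  (forall eps : R, 0 < eps -> natural_dimension (famFhat eps) s0) /\
  (exists d : R, natural_dimension (@famF R) d /\ s0 < d).
Proof.
move=> s0pos hs0.
have pHs0 : pH s0 = 1 by rewrite /pH addrC.
split.
  move=> eps e0; exists 0, (3/2 * eps); split; last split.
  - right; split.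
      move=> [phi [_ [_ Heq]]].
      have h k : famFhat eps k phi = phi.
        have : (\bigcup_(k in [set: 'I_2]) (famFhat eps k @` [set phi])) (famFhat eps k phi).
          by exists k => //; exists phi.
        by rewrite -Heq.
      have h0 := h ord0; have h1 := h (@Ordinal 2 1 isT).
      rewrite /famFhat /= /f1 /f2hat in h0 h1.
      by move: h0; case: ifP => _; lra.
    split.
      split; first lra.
      move=> k x /andP[x0 xL]; rewrite /famFhat; case: ifP => _.
        rewrite /f1; have -> : (x < 0) = false by apply/negbTE; rewrite -leNgt.
        apply/andP; split; lra.
      rewrite /f2hat; apply/andP; split; lra.
    move=> c d [cd Hinv]; split.
      have := Hinv ord0 c; rewrite lexx cd /famFhat /= /f1 => /(_ isT) /andP[u _].
      move: u; case: ifP => _; lra.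
    have := Hinv (@Ordinal 2 1 isT) d; rewrite lexx cd /famFhat /= /f2hat => /(_ isT) /andP[_ u].
    lra.
  - by rewrite press_hat // pHs0 ln1.
  - move=> t; rewrite press_hat // => /eqP; rewrite eqe => /eqP/eqP.
    rewrite ln_eq0 ?pH_gt0 // => /eqP pt.
    case: (ltgtP t s0) => // ts.
      by have := pH_decr _ _ ts; rewrite pt pHs0 ltxx.
    by have := pH_decr _ _ ts; rewrite pt pHs0 ltxx.
have p0 : pN (0 : R) = 2 by rewrite /pN !powRr0.
have p1 : pN (1 : R) = 11/15 by rewrite /pN !powRr1; lra.
have hv : Num.min (pN (0:R)) (pN 1) <= 1 <= Num.max (pN (0:R)) (pN 1).
  rewrite p0 p1 ge_min le_max; apply/andP; split; apply/orP; [right|left]; lra.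
have [d _ pd] := @IVT R pN 0 1 1 ler01 (continuous_subspaceT pN_cont) hv.
exists d; split.
  exists (0 - 2^-1), (0 + 2^-1); split; last split.
  - left; exists 0; split => //; split.
      by exists 0.
    split; first exact: compact_set1.
    apply/seteqP; split => x.
      move=> -> /=; exists ord0 => //; exists 0 => //.
      by rewrite /famF /= /f1 ltxx mulr0.
    move=> [k _ [y -> <-]]; rewrite /famF; case: ifP => _.
      by rewrite /f1 ltxx mulr0.
    by rewrite /f2 mulr0.
  - by rewrite press_F pd ln1.
  - move=> t; rewrite press_F => /eqP; rewrite eqe => /eqP/eqP.
    rewrite ln_eq0 ?pN_gt0 // => /eqP pt.
    case: (ltgtP t d) => // ts.
      by have := pN_decr _ _ ts; rewrite pt pd ltxx.
    by have := pN_decr _ _ ts; rewrite pt pd ltxx.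
have lt1 : 1 < pN s0.
  rewrite -pHs0 /pH /pN ltrD2r gt0_ltr_powR // ?nnegrE; lra.
case: (ltP s0 d) => // ds.
have := ds; rewrite le_eqVlt => /predU1P[eq|lt].
  by move: lt1; rewrite -eq pd ltxx.
by have := pN_decr _ _ lt; rewrite pd => h; move: (lt_trans h lt1); rewrite ltxx.
Qed.
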